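(* Let $n>1$ be an odd perfect square. Then $D_{S(n)^*}=5$.
   Context: For a natural number $n$, $\mathbb Z_n=\mathbb Z/n\mathbb Z$, $S(n)=\{x^2:x\in\mathbb Z_n\}$, $S(n)^*=S(n)\setminus\{0\}$. For $A\subseteq\mathbb Z_n$, a sequence $(y_1,\dots,y_t)$ ($t\ge1$) in $\mathbb Z_n$ is an $A$-weighted zero-sum sequence if there exist $a_1,\dots,a_t\in A$ with $\sum a_iy_i=0$; a sequence has an $A$-weighted zero-sum subsequence if some nonempty subsequence is an $A$-weighted zero-sum sequence. $D_A(n)$ is the least positive integer $t$ such that every sequence of length $t$ in $\mathbb Z_n$ has an $A$-weighted zero-sum subsequence; $D_{S(n)^*}=D_{S(n)^*}(n)$. *)

(* Defs.v *)
From mathcomp Require Import all_boot all_algebra.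
Set Implicit Arguments. Unset Strict Implicit. Unset Printing Implicit Defensive.
Import GRing.Theory.
Local Open Scope ring_scope.

(* Z_n = 'Z_n (only used with 1 < n). *)

Definition sqZ (n : nat) : {set 'Z_n} := [set x ^+ 2 | x : 'Z_n].
Definition sqZstar (n : nat) : {set 'Z_n} := sqZ n :\ 0.

Definition weighted_zero_sum (n : nat) (A : {set 'Z_n}) (y : seq 'Z_n) : Prop :=
  (0 < size y)%N /\
  exists a : seq 'Z_n, [/\ size a = size y, all (fun x => x \in A) a &
     \sum_(i < size y) a`_i * y`_i = 0].

Definition has_weighted_zs_subseq (n : nat) (A : {set 'Z_n}) (y : seq 'Z_n) : Prop :=
  exists z : seq 'Z_n, [/\ subseq z y, (0 < size z)%N & weighted_zero_sum A z].

Definition all_seq_have_wzs (n : nat) (A : {set 'Z_n}) (t : nat) : Prop :=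
  forall y : seq 'Z_n, size y = t -> has_weighted_zs_subseq A y.

Definition is_DA (n : nat) (A : {set 'Z_n}) (t : nat) : Prop :=
  [/\ (0 < t)%N, all_seq_have_wzs A t &
      forall t', (0 < t')%N -> (t' < t)%N -> ~ all_seq_have_wzs A t'].

(* Main.v *)
Require Import Defs.
From mathcomp Require Import all_boot all_algebra.
From mathcomp Require Import zify ring.
Set Implicit Arguments. Unset Strict Implicit. Unset Printing Implicit Defensive.
Import GRing.Theory.

Open Scope ring_scope.

Lemma natZ0 (N K : nat) : (1 < N)%N -> ((K%:R : 'Z_N) == 0) = (N %| K)%N.
Proof.
move=> hN; apply/idP/idP.
  by move/eqP => /(congr1 val) /=; rewrite val_Zp_nat // => /eqP.
by move=> hd; apply/eqP/val_inj; rewrite /= val_Zp_nat //; apply/eqP.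
Qed.

Lemma natF0 (p K : nat) : prime p -> ((K%:R : 'F_p) == 0) = (p %| K)%N.
Proof.
move=> hp; apply/idP/idP.
  by move/eqP => /(congr1 val) /=; rewrite val_Fp_nat // => /eqP.
by move=> hd; apply/eqP/val_inj; rewrite /= val_Fp_nat //; apply/eqP.
Qed.

Lemma natF_val (p : nat) (x : 'F_p) : prime p -> ((val x)%:R : 'F_p) = x.
Proof. by move=> hp; apply: natr_Zp. Qed.

Lemma natZ_val (N : nat) (x : 'Z_N) : (1 < N)%N -> ((val x)%:R : 'Z_N) = x.
Proof. by move=> hN; apply: natr_Zp. Qed.

Definition wsum n (a y : seq 'Z_n) := \sum_(i < size y) a`_i * y`_i.

Lemma wsum_cons n (a0 y0 : 'Z_n) a y : wsum (a0 :: a) (y0 :: y) = a0 * y0 + wsum a y.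
Proof. by rewrite /wsum big_ord_recl. Qed.

Lemma wsum_nil n (a : seq 'Z_n) : wsum a [::] = 0.
Proof. by rewrite /wsum big_ord0. Qed.

Open Scope ring_scope.

Lemma G_ind n (y w : seq 'Z_n) : size w = size y -> all (fun x => x \in sqZ n) w ->
  exists z a, [/\ subseq z y, size a = size z, all (fun x => x \in sqZstar n) a,
     wsum a z = wsum w y & (has (fun x => x != 0) w -> (0 < size z)%N)].
Proof.
elim: y w => [|y0 y IH] [|w0 w] //=.
  by move=> _ _; exists [::], [::]; split.
case=> hs /andP [hw0 hw].
have [z [a [h1 h2 h3 h4 h5]]] := IH w hs hw.
have [->|nz] := eqVneq w0 0.
  exists z, a; split => //.
  - exact: (subseq_trans h1 (subseq_cons y y0)).
  - by rewrite wsum_cons mul0r add0r.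
exists (y0 :: z), (w0 :: a); split => //=.
- by rewrite eqxx.
- by rewrite h2.
- by rewrite /sqZstar !inE nz hw0.
- by rewrite !wsum_cons h4.
Qed.

Lemma G_fwd n (y w : seq 'Z_n) : size w = size y -> all (fun x => x \in sqZ n) w ->
  has (fun x => x != 0) w -> wsum w y = 0 -> has_weighted_zs_subseq (sqZstar n) y.
Proof.
move=> hs hw hh h0.
have [z [a [h1 h2 h3 h4 h5]]] := G_ind hs hw.
exists z; split => //; first exact: h5.
split; first exact: h5.
by exists a; split => //; rewrite -/(wsum a z) h4.
Qed.

Lemma G_back_ind n (y : seq 'Z_n) (bm : bitseq) (a : seq 'Z_n) :
  size bm = size y -> size a = size (mask bm y) -> all (fun x => x \in sqZstar n) a ->
  exists w, [/\ size w = size y, all (fun x => x \in sqZ n) w,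
     (0 < size a)%N -> has (fun x => x != 0) w & wsum w y = wsum a (mask bm y)].
Proof.
elim: y bm a => [|y0 y IH] [|b bm] a //=.
  move=> _ ha _; exists [::]; split => //; by case: a ha.
case=> hs; case: b => /=.
  case: a => [|a0 a] //= [ha] /andP [ha0 hA].
  have [w [w1 w2 w3 w4]] := IH bm a hs ha hA.
  move: ha0; rewrite /sqZstar !inE => /andP [nz ha0].
  exists (a0 :: w); split => //=.
  - by rewrite w1.
  - by rewrite ha0.
  - by rewrite nz.
  - by rewrite !wsum_cons w4.
move=> ha hA.
have [w [w1 w2 w3 w4]] := IH bm a hs ha hA.
exists (0 :: w); split => //=.
- by rewrite w1.
- by rewrite w2 andbT /sqZ; apply/imsetP; exists 0 => //; rewrite expr0n.
- by rewrite wsum_cons mul0r add0r w4.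
Qed.

Lemma G_back n (y : seq 'Z_n) : has_weighted_zs_subseq (sqZstar n) y ->
  exists w, [/\ size w = size y, all (fun x => x \in sqZ n) w,
     has (fun x => x != 0) w & wsum w y = 0].
Proof.
case=> z [/subseqP [bm hbm ->] hz [_ [a [ha hA h0]]]].
have [w [w1 w2 w3 w4]] := G_back_ind hbm ha hA.
exists w; split => //; first by apply: w3; rewrite ha.
by rewrite w4.
Qed.

Open Scope ring_scope.

Lemma sq_inj_half (p i j : nat) : prime p -> (p %% 2 = 1)%N ->
  (i < p.+1 %/ 2)%N -> (j < p.+1 %/ 2)%N ->
  (i%:R ^+ 2 : 'F_p) = j%:R ^+ 2 -> i = j.
Proof.
move=> hp hodd hi hj /eqP; rewrite -subr_eq0 subr_sqr mulf_eq0 => /orP [].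
  rewrite subr_eq0 => /eqP /(congr1 val) /=; rewrite !val_Fp_nat // !modn_small //; lia.
rewrite -natrD natF0 // => hd.
have hp1 := prime_gt1 hp.
case: (posnP (i + j)) => h; first lia.
have := dvdn_leq h hd; lia.
Qed.

Lemma lemA (p : nat) (z1 z2 z3 : 'F_p) : prime p -> (p %% 2 = 1)%N -> z1 != 0 -> z2 != 0 ->
  exists X Y : nat, z1 * X%:R ^+ 2 + z2 * Y%:R ^+ 2 + z3 = 0.
Proof.
move=> hp hodd nz1 nz2.
pose h := (p.+1 %/ 2)%N.
pose f := fun i : 'I_p.+1 => if (i < h)%N then z1 * (i : nat)%:R ^+ 2
   else - (z2 * ((i - h)%N)%:R ^+ 2 + z3).
have : ~~ injectiveb f.
  apply/negP => /injectiveP finj.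
  by have := @leq_card _ _ f finj; rewrite card_ord card_Fp //; lia.
case/injectivePn => i [j nij].
rewrite /f.
have hi := ltn_ord i; have hj := ltn_ord j.
case: ifP => ih; case: ifP => jh.
- move/(mulfI nz1)/(sq_inj_half hp hodd ih jh) => eij.
  by case/eqP: nij; apply: val_inj.
- move=> e; exists i, (j - h)%N; by rewrite e -addrA addNr.
- move=> e; exists j, (i - h)%N; by rewrite -e -addrA addNr.
- move/oppr_inj/addIr/(mulfI nz2) => e.
  have := sq_inj_half hp hodd (_ : (i - h < h)%N) (_ : (j - h < h)%N) e.
  move=> /(_ _ _) H.
  by case/eqP: nij; apply: val_inj => /=; move: ih jh; rewrite /h in H *; lia.
Qed.

Open Scope ring_scope.

Lemma lemA_nat (p z1 z2 z3 : nat) : prime p -> (p %% 2 = 1)%N ->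
  ~~ (p %| z1)%N -> ~~ (p %| z2)%N ->
  exists X Y : nat, (p %| X ^ 2 * z1 + Y ^ 2 * z2 + z3)%N.
Proof.
move=> hp hodd h1 h2.
have [||X [Y e]] := @lemA p (z1%:R) (z2%:R) (z3%:R) hp hodd; rewrite ?natF0 //.
exists X, Y; rewrite -natF0 // !natrD !natrM; apply/eqP; rewrite -e; ring.
Qed.

Lemma p_not2 (p : nat) : prime p -> (p %% 2 = 1)%N -> ~~ (p %| 2)%N.
Proof.
move=> hp hodd; apply/negP => /(dvdn_leq (isT : (0 < 2)%N)) h.
have := prime_gt1 hp; lia.
Qed.

Lemma lift3 (p S y3 : nat) : prime p -> (p %% 2 = 1)%N -> ~~ (p %| y3)%N ->
  (p %| S + y3)%N -> exists x3, ~~ (p %| x3)%N /\ (p ^ 2 %| S + x3 ^ 2 * y3)%N.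
Proof.
move=> hp hodd hy /dvdnP [t ht].
have nz : ((2 * y3)%N%:R : 'F_p) != 0.
  by rewrite natF0 // Euclid_dvdM // negb_or p_not2.
pose c := val (- (t%:R : 'F_p) / (2 * y3)%N%:R).
have hc : (p %| t + 2 * c * y3)%N.
  by rewrite -natF0 // natrD mulnAC natrM /c natF_val // mulrC divfK // addrN.
case/dvdnP: hc => u hu.
exists (1 + p * c)%N; split.
  rewrite dvdn_addl ?dvdn_mulr //; apply/negP => /(dvdn_leq (isT : (0 < 1)%N)).
  by have := prime_gt1 hp; lia.
apply/dvdnP; exists (u + c ^ 2 * y3)%N.
nia.
Qed.

Close Scope ring_scope.

Lemma U3 (p y1 y2 y3 : nat) : prime p -> p %% 2 = 1 ->
  [&& ~~ (p %| y1), ~~ (p %| y2) & ~~ (p %| y3)] || [&& p %| y1, p %| y2 & p %| y3] ->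
  exists x1 x2 x3, [|| ~~ (p %| x1), ~~ (p %| x2) | ~~ (p %| x3)] &&
    (p ^ 2 %| x1 ^ 2 * y1 + x2 ^ 2 * y2 + x3 ^ 2 * y3).
Proof.
move=> hp hodd /orP [/and3P [h1 h2 h3] | /and3P [h1 h2 h3]].
  have [X [Y hXY]] := lemA_nat y3 hp hodd h1 h2.
  have [x3 [hx3 hd]] := lift3 hp hodd h3 hXY.
  by exists X, Y, x3; rewrite hx3 !orbT.
have hp1 := prime_gt1 hp.
have pn1 : ~~ (p %| 1) by apply/negP => /(dvdn_leq (isT : 0 < 1)); lia.
case: (boolP (p ^ 2 %| y1)) => g1.
  by exists 1, 0, 0; rewrite pn1 /=; move: g1; rewrite !(exp1n, exp0n, mul1n, mul0n, addn0).
case: (boolP (p ^ 2 %| y2)) => g2.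
  by exists 0, 1, 0; rewrite pn1 orbT /=; move: g2; rewrite !(exp1n, exp0n, mul1n, mul0n, addn0, add0n).
case: (boolP (p ^ 2 %| y3)) => g3.
  by exists 0, 0, 1; rewrite pn1 !orbT /=; move: g3; rewrite !(exp1n, exp0n, mul1n, mul0n, addn0, add0n).
have nd : forall y, p %| y -> ~~ (p ^ 2 %| y) -> ~~ (p %| y %/ p).
  move=> y hy hy2; apply/negP => hd; case/negP: hy2.
  by rewrite -(divnK hy) expnS expn1 dvdn_pmul2r ?prime_gt0.
have [X [Y hXY]] := lemA_nat (y3 %/ p) hp hodd (nd _ h1 g1) (nd _ h2 g2).
exists X, Y, 1; rewrite pn1 !orbT /=.
rewrite -(divnK h1) -(divnK h2) -(divnK h3) expnS expn1 exp1n mul1n !mulnA -!mulnDl.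
by rewrite dvdn_pmul2r ?prime_gt0.
Qed.

Open Scope ring_scope.

Lemma nz_weight (n p k x : nat) : prime p -> (0 < k)%N -> n = ((p * k) ^ 2)%N -> ~~ (p %| x)%N ->
  (((k * x)%:R : 'Z_n) ^+ 2) != 0.
Proof.
move=> hp hk hn hx.
have hn1 : (1 < n)%N.
  rewrite hn; have := prime_gt1 hp; nia.
rewrite -natrX natZ0 // hn !expnMn mulnC dvdn_pmul2l ?expn_gt0 ?hk //.
apply/negP => /(dvdn_trans (dvdn_exp2l p (isT : (1 <= 2)%N))).
by rewrite expn1 Euclid_dvdX // andbT (negPf hx).
Qed.

Lemma upper_triple (n p k : nat) (a b c : 'Z_n) : prime p -> (p %% 2 = 1)%N -> (0 < k)%N ->
  n = ((p * k) ^ 2)%N ->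
  [&& ~~ (p %| a), ~~ (p %| b) & ~~ (p %| c)]%N || [&& p %| a, p %| b & p %| c]%N ->
  has_weighted_zs_subseq (sqZstar n) [:: a; b; c].
Proof.
move=> hp hodd hk hn habc.
have hn1 : (1 < n)%N.
  rewrite hn; have := prime_gt1 hp; nia.
have [x1 [x2 [x3 /andP [hnz hd]]]] := U3 hp hodd habc.
pose W := fun x : nat => ((k * x)%:R : 'Z_n) ^+ 2.
apply: (@G_fwd _ _ [:: W x1; W x2; W x3]) => //=.
- by rewrite !andbT; apply/and3P; split; apply/imsetP; [exists ((k*x1)%:R) | exists ((k*x2)%:R) | exists ((k*x3)%:R)].
- by case/or3P: hnz => h; rewrite (nz_weight hp hk hn h) ?orbT.
rewrite !wsum_cons wsum_nil addr0 /W.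
apply/eqP; rewrite -[a]natr_Zp -[b]natr_Zp -[c]natr_Zp -!natrX -!natrM -!natrD natZ0 //.
have -> : ((k * x1) ^ 2 * a + ((k * x2) ^ 2 * b + (k * x3) ^ 2 * c) =
   k ^ 2 * (x1 ^ 2 * a + x2 ^ 2 * b + x3 ^ 2 * c))%N by ring.
by rewrite [X in (X %| _)%N]hn expnMn mulnC dvdn_mul.
Qed.

Open Scope ring_scope.

Lemma extract3 (T : eqType) (P : pred T) (s : seq T) : size s = 5%N ->
  exists z, [/\ subseq z s, size z = 3%N & all P z || all (predC P) z].
Proof.
move=> hs.
have hc := count_predC P s; rewrite hs in hc.
case: (leqP 3 (count P s)) => h.
  exists (take 3 (filter P s)); split.
  - exact: subseq_trans (take_subseq _ _) (filter_subseq _ _).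
  - by rewrite size_take size_filter; case: ltnP => // ?; lia.
  - by apply/orP; left; apply/allP => x /mem_take; rewrite mem_filter => /andP [].
exists (take 3 (filter (predC P) s)); split.
- exact: subseq_trans (take_subseq _ _) (filter_subseq _ _).
- by rewrite size_take size_filter; case: ltnP => // ?; lia.
- by apply/orP; right; apply/allP => x /mem_take; rewrite mem_filter => /andP [].
Qed.

Lemma wzs_subseq n (A : {set 'Z_n}) (z y : seq 'Z_n) :
  subseq z y -> has_weighted_zs_subseq A z -> has_weighted_zs_subseq A y.
Proof.
move=> hzy [u [hu hsz hw]]; exists u; split => //.
exact: subseq_trans hu hzy.
Qed.

Lemma upper_bound (n p k : nat) : prime p -> (p %% 2 = 1)%N -> (0 < k)%N ->
  n = ((p * k) ^ 2)%N -> all_seq_have_wzs (sqZstar n) 5.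
Proof.
move=> hp hodd hk hn y hy.
have [z [hzy hz hall]] := extract3 (fun x : 'Z_n => (p %| x)%N) hy.
apply: wzs_subseq hzy _.
case: z hz hall => [|a [|b [|c [|? ?]]]] //= _ hall.
apply: upper_triple hp hodd hk hn _.
by move: hall; rewrite !andbT orbC.
Qed.

Open Scope ring_scope.

Definition nonres (q a : nat) := forall x : 'F_q, x ^+ 2 + a%:R != 0.

Lemma nonres_exists q : prime q -> (q %% 2 = 1)%N -> exists a0, nonres q a0.
Proof.
move=> hq hodd.
case: (boolP [exists b : 'F_q, [forall x : 'F_q, x ^+ 2 != b]]).
  case/existsP => b /forallP hb; exists (val (- b)) => x.
  by rewrite natF_val // subr_eq0.
rewrite negb_exists => /forallP H.
have ex : forall b : 'F_q, exists x : 'F_q, x ^+ 2 == b.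
  move=> b; have := H b; rewrite negb_forall => /existsP [x]; rewrite negbK => hx.
  by exists x.
have /all_sig [g hg] : forall b : 'F_q, {x : 'F_q | x ^+ 2 == b} by move=> b; exact: sigW.
have ginj : injective g.
  by move=> u v e; have := hg u; rewrite e (eqP (hg v)) => /eqP.
have [h hgh hhg] := injF_bij ginj.
have e1 : h 1 = 1 by rewrite -(eqP (hg (h 1))) hhg expr1n.
have e2 : h (-1) = 1 by rewrite -(eqP (hg (h (-1)))) hhg sqrrN expr1n.
have : (1 : 'F_q) = -1 by rewrite -[LHS]hhg -[RHS]hhg e1 e2.
move/eqP; rewrite -subr_eq0 opprK => h2.
have : ((2%N)%:R : 'F_q) == 0 by rewrite mulr2n.
by rewrite natF0 // (negPf (p_not2 hq hodd)).
Qed.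

Lemma nonres_mod q a a' : prime q -> (a = a' %[mod q])%N -> nonres q a -> nonres q a'.
Proof. by move=> hq e h x; rewrite -Fp_nat_mod // -e Fp_nat_mod. Qed.

Lemma nonres_key q a U V : prime q -> nonres q a -> (q %| U ^ 2 + a * V ^ 2)%N ->
  (q %| U)%N /\ (q %| V)%N.
Proof.
move=> hq hn hd.
have e : (U%:R : 'F_q) ^+ 2 + a%:R * V%:R ^+ 2 = 0.
  by apply/eqP; rewrite -natF0 // in hd; move: hd; rewrite natrD natrM !natrX.
have hV : (q %| V)%N.
  rewrite -natF0 //; apply/negPn/negP => nz.
  have := hn (U%:R / V%:R); rewrite expr_div_n.
  have -> : (U%:R : 'F_q) ^+ 2 = - (a%:R * V%:R ^+ 2) by apply/eqP; rewrite -addr_eq0 e.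
  by rewrite mulNr mulrK ?unitfE ?expf_eq0 // addNr eqxx.
split => //.
have V0 : (V%:R : 'F_q) = 0 by apply/eqP; rewrite natF0.
move: e; rewrite V0 expr0n /= mulr0 addr0 => /eqP; rewrite expf_eq0 /= natF0 //.
Qed.

Close Scope ring_scope.

Lemma K2 q a : prime q -> nonres q a -> forall j U V S T c1 c2,
  ~~ (q %| c1) -> ~~ (q %| c2) ->
  q ^ j %| c1 * (U ^ 2 + a * V ^ 2) + q * c2 * (S ^ 2 + a * T ^ 2) ->
  [/\ q ^ (j.+1 %/ 2) %| U, q ^ (j.+1 %/ 2) %| V, q ^ (j %/ 2) %| S & q ^ (j %/ 2) %| T].
Proof.
move=> hq hn; elim=> [|j IH] U V S T c1 c2 h1 h2 hd.
  by rewrite !divn_small ?expn0 ?dvd1n.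
have hq1 : q %| c1 * (U ^ 2 + a * V ^ 2) + q * c2 * (S ^ 2 + a * T ^ 2).
  by apply: dvdn_trans hd; rewrite expnS dvdn_mulr.
move: hq1; rewrite dvdn_addl; last by rewrite -mulnA dvdn_mulr.
rewrite Euclid_dvdM // (negPf h1) /= => /(nonres_key hq hn) [hU hV].
rewrite -(divnK hU) -(divnK hV) in hd *.
set U' := U %/ q; set V' := V %/ q.
have e : c1 * ((U' * q) ^ 2 + a * (V' * q) ^ 2) + q * c2 * (S ^ 2 + a * T ^ 2)
   = (c2 * (S ^ 2 + a * T ^ 2) + q * c1 * (U' ^ 2 + a * V' ^ 2)) * q by ring.
rewrite e in hd; move: hd; rewrite expnSr dvdn_pmul2r ?prime_gt0 // => hd.
have [i1 i2 i3 i4] := IH S T U' V' c2 c1 h2 h1 hd.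
have -> : j.+2 %/ 2 = (j %/ 2).+1 by rewrite -add2n -{1}(mul1n 2) divnMDl.
by split; rewrite ?expnSr ?dvdn_mul.
Qed.

Close Scope ring_scope.

Lemma ar_exists (s : seq nat) : all prime s -> uniq s -> all (fun q => q %% 2 == 1) s ->
  exists a r, [/\ 0 < r, (forall q, prime q -> q %| r -> q \in s) &
     forall q, q \in s -> [/\ nonres q a, q %| r & ~~ (q ^ 2 %| r)]].
Proof.
elim: s => [|q s IH] /=.
  move=> _ _ _; exists 0, 1; split => // q hq hd.
  by have := dvdn_leq (isT : 0 < 1) hd; have := prime_gt1 hq; lia.
case/andP => hq hs /andP [qs us] /andP [/eqP hqo ho].
have [a' [r' [r0 rs rP]]] := IH hs us ho.
have nqr : ~~ (q %| r') by apply/negP => /(rs _ hq); rewrite (negPf qs).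
have cop : coprime q r' by rewrite prime_coprime.
have [a0 ha0] := nonres_exists hq hqo.
exists (chinese q r' a0 a'), (q * r'); split.
- by rewrite muln_gt0 prime_gt0.
- move=> q'' hq'' /=; rewrite Euclid_dvdM // => /orP [|].
    by rewrite dvdn_prime2 // => /eqP ->; rewrite inE eqxx.
  by move/(rs _ hq'') => h; rewrite inE h orbT.
move=> q'; rewrite inE => /orP [/eqP ->|q's].
  split.
  - by apply: nonres_mod hq _ ha0; rewrite (chinese_modl cop).
  - exact: dvdn_mulr.
  - by rewrite expnS expn1 dvdn_pmul2l ?prime_gt0.
have hq' : prime q' by move/allP: hs; apply.
have [h1 h2 h3] := rP q' q's.
have neq : q' != q by apply/negP => /eqP e; rewrite -e q's in qs.
split.
- apply: nonres_mod hq' _ h1.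
  by rewrite -(modn_dvdm (chinese q r' a0 a') h2) (chinese_modr cop) modn_dvdm.
- by rewrite dvdn_mull.
- rewrite Gauss_dvdr //; apply: coprimeXl.
  by rewrite prime_coprime // dvdn_prime2 // eq_sym.
Qed.

Close Scope ring_scope.

Lemma lower_core (m a r X1 X2 X3 X4 : nat) : 0 < m ->
  (forall q, prime q -> q %| m -> [/\ nonres q a, q %| r & ~~ (q ^ 2 %| r)]) ->
  m ^ 2 %| X1 ^ 2 + X2 ^ 2 * a + X3 ^ 2 * r + X4 ^ 2 * (a * r) ->
  [/\ m %| X1, m %| X2, m %| X3 & m %| X4].
Proof.
move=> hm H hd.
have key : forall q, q \in \pi(m) ->
   [/\ m`_q %| X1, m`_q %| X2, m`_q %| X3 & m`_q %| X4].
  move=> q; rewrite mem_primes => /and3P [hq _ hqm].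
  have [hn hr hr2] := H q hq hqm.
  have hc2 : ~~ (q %| r %/ q).
    apply/negP => hd2; case/negP: hr2.
    by rewrite -(divnK hr) expnS expn1 dvdn_pmul2r ?prime_gt0.
  have h1 : ~~ (q %| 1) by apply/negP => /(dvdn_leq (isT : 0 < 1)); have := prime_gt1 hq; lia.
  set e := logn q m.
  have hqe : q ^ (e * 2) %| 1 * (X1 ^ 2 + a * X2 ^ 2) + q * (r %/ q) * (X3 ^ 2 + a * X4 ^ 2).
    have -> : 1 * (X1 ^ 2 + a * X2 ^ 2) + q * (r %/ q) * (X3 ^ 2 + a * X4 ^ 2)
       = X1 ^ 2 + X2 ^ 2 * a + X3 ^ 2 * (r %/ q * q) + X4 ^ 2 * (a * (r %/ q * q)) by ring.
    rewrite divnK //; apply: dvdn_trans hd.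
    by rewrite expnM dvdn_exp2r // -p_part dvdn_part.
  have [i1 i2 i3 i4] := K2 hq hn h1 hc2 hqe.
  have E1 : (e * 2).+1 %/ 2 = e by rewrite -addn1 divnMDl // divn_small ?addn0.
  have E2 : (e * 2) %/ 2 = e by rewrite mulnK.
  rewrite E1 in i1 i2; rewrite E2 in i3 i4.
  by rewrite p_part.
by split; apply/dvdn_partP => // q /key [].
Qed.

Open Scope ring_scope.

Lemma sqZ0 n (m X : nat) : (1 < n)%N -> n = (m ^ 2)%N -> (m %| X)%N -> ((X%:R : 'Z_n) ^+ 2) = 0.
Proof.
move=> hn1 hn hd; apply/eqP; rewrite -natrX natZ0 //.
by rewrite [X in (X %| _)%N]hn dvdn_exp2r.
Qed.

Lemma lower_seq (n m a r : nat) : (1 < m)%N -> n = (m ^ 2)%N ->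
  (forall q, prime q -> (q %| m)%N -> [/\ nonres q a, (q %| r)%N & ~~ (q ^ 2 %| r)%N]) ->
  ~ has_weighted_zs_subseq (sqZstar n) [:: 1; a%:R; r%:R; (a * r)%N%:R].
Proof.
move=> hm hn H /G_back [w [hs hw hh h0]].
have hn1 : (1 < n)%N by rewrite hn; nia.
case: w hs hw hh h0 => [|w1 [|w2 [|w3 [|w4 [|? ?]]]]] //= _.
rewrite !andbT => /and4P [/imsetP [x1 _ ->] /imsetP [x2 _ ->] /imsetP [x3 _ ->] /imsetP [x4 _ ->]].
rewrite !wsum_cons wsum_nil addr0 => hh.
rewrite -[x1]natr_Zp -[x2]natr_Zp -[x3]natr_Zp -[x4]natr_Zp in hh *.
rewrite mulr1 -!natrX -!natrM -!natrD => /eqP; rewrite natZ0 // => hd.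
have hd' : (m ^ 2 %| x1 ^ 2 + x2 ^ 2 * a + x3 ^ 2 * r + x4 ^ 2 * (a * r))%N.
  by move: hd; rewrite [X in (X %| _)%N]hn !addnA.
have [d1 d2 d3 d4] := @lower_core m a r x1 x2 x3 x4 (ltnW hm) H hd'.
by move: hh; rewrite !(sqZ0 hn1 hn) // eqxx.
Qed.

Open Scope ring_scope.

Lemma lower_all (n m : nat) : (1 < m)%N -> odd m -> n = (m ^ 2)%N ->
  forall t', (0 < t')%N -> (t' < 5)%N -> ~ all_seq_have_wzs (sqZstar n) t'.
Proof.
move=> hm hodd hn t' ht1 ht5 Hall.
have s1 : all prime (primes m) by apply/allP => q; rewrite mem_primes => /andP [].
have s2 : all (fun q => q %% 2 == 1)%N (primes m).
  apply/allP => q; rewrite mem_primes => /and3P [_ _ hq].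
  by rewrite modn2 (dvdn_odd hq hodd).
have [a [r [r0 rs rP]]] := @ar_exists (primes m) s1 (primes_uniq m) s2.
have H : forall q, prime q -> (q %| m)%N -> [/\ nonres q a, (q %| r)%N & ~~ (q ^ 2 %| r)%N].
  by move=> q hq hqm; apply: rP; rewrite mem_primes hq hqm andbT; lia.
pose Y : seq 'Z_n := [:: 1; a%:R; r%:R; (a * r)%N%:R].
apply: (lower_seq hm hn H).
apply: (@wzs_subseq _ _ (take t' Y)); first exact: take_subseq.
apply: Hall.
by rewrite size_take /=; case: ltnP => //; lia.
Qed.

Close Scope ring_scope.

Theorem mainTheorem15 (n : nat) :
  (1 < n)%N -> odd n -> (exists m : nat, n = (m ^ 2)%N) ->
  is_DA (sqZstar n) 5.
Proof.
move=> hn1 hodd [m hm].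
have hmo : odd m by move: hodd; rewrite hm oddX.
have hm1 : (1 < m)%N by move: hn1; rewrite hm; case: m {hm hmo} => [|[|m]] //.
split => //; last exact: lower_all hm1 hmo hm.
set p := pdiv m.
have hp : prime p := pdiv_prime hm1.
have hpm : (p %| m)%N := pdiv_dvd m.
have hpo : (p %% 2 = 1)%N by rewrite modn2 (dvdn_odd hpm hmo).
have hk : (0 < m %/ p)%N by rewrite divn_gt0 ?prime_gt0 // dvdn_leq //; lia.
apply: (upper_bound hp hpo hk).
by rewrite mulnC divnK.
Qed.
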